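(* Let $x,y:\mathbb{Z}\to\mathbb{R}$ be the coordinates of the vertices of a polygon indexed by $u\in\mathbb{Z}$, let $X+ih_1$, $Y+ih_2$ be their discrete analytic extensions, $h=(h_1,h_2)$, $P=(X,Y)$, and let $F:\mathbb{Z}^2\to\mathbb{R}$ satisfy $F(u+1,v)-F(u,v)=-[h(u+\tfrac12,v-\tfrac12),h(u+\tfrac12,v+\tfrac12)]$ and $F(u,v+1)-F(u,v)=[h(u-\tfrac12,v+\tfrac12),h(u+\tfrac12,v+\tfrac12)]$. For $(u,v)\in\mathbb{Z}^2$ let $v_1=P(u+1,v)-P(u,v)$, $v_2=P(u,v+1)-P(u,v)$, $v_3=P(u-1,v)-P(u,v)$, $v_4=P(u,v-1)-P(u,v)$, and let $A(u,v)=[v_3,v_2]+[v_1,v_4]$ (the area of the quadrangle with vertices $P(u+1,v),P(u,v+1),P(u-1,v),P(u,v-1)$). Then $$F(u+1,v)+F(u,v+1)+F(u-1,v)+F(u,v-1)-4F(u,v)=A(u,v).$$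
   Context: $[X,Y]$ is the $2\times2$ determinant with columns $X,Y$. With $(\mathbb{Z}^2)^*=(\mathbb{Z}+\tfrac12)^2$, functions $g:\mathbb{Z}^2\to\mathbb{R}$, $k:(\mathbb{Z}^2)^*\to\mathbb{R}$ form a discrete analytic function $g+ik$ if $g(u+1,v)-g(u,v)=k(u+\tfrac12,v+\tfrac12)-k(u+\tfrac12,v-\tfrac12)$ and $g(u,v+1)-g(u,v)=-(k(u+\tfrac12,v+\tfrac12)-k(u-\tfrac12,v+\tfrac12))$ for all $(u,v)$. The discrete analytic extension of $x$ is the unique $X+ih_1$ with $X(u,0)=x(u)$ and $h_1(u+\tfrac12,\tfrac12)=-h_1(u+\tfrac12,-\tfrac12)$; likewise $Y+ih_2$ for $y$. *)

(* Defs.v *)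
From Stdlib Require Import Reals ZArith.
Open Scope R_scope.

(* Convention: a function on the dual lattice (Z^2)^* = (Z+1/2)^2 is
   represented by  k : Z -> Z -> R  where  k a b  is the value at
   (a + 1/2, b + 1/2). *)

Definition det2 (X Y : R * R) : R := fst X * snd Y - snd X * fst Y.

Definition discrete_analytic (g : Z -> Z -> R) (k : Z -> Z -> R) : Prop :=
  (forall u v : Z, g (u + 1)%Z v - g u v = k u v - k u (v - 1)%Z) /\
  (forall u v : Z, g u (v + 1)%Z - g u v = - (k u v - k (u - 1)%Z v)).

Definition discrete_analytic_extension (x : Z -> R) (g k : Z -> Z -> R) : Prop :=
  discrete_analytic g k /\
  (forall u : Z, g u 0%Z = x u) /\
  (forall u : Z, k u 0%Z = - k u (-1)%Z).

(* Main.v *)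
Require Import Defs.
From Stdlib Require Import Reals ZArith.
Open Scope R_scope.

Theorem mainTheorem12
  (x y : Z -> R) (X h1 Y h2 : Z -> Z -> R) (F : Z -> Z -> R)
  (hX : discrete_analytic_extension x X h1)
  (hY : discrete_analytic_extension y Y h2)
  (hF1 : forall u v : Z,
      F (u + 1)%Z v - F u v =
      - det2 (h1 u (v - 1)%Z, h2 u (v - 1)%Z) (h1 u v, h2 u v))
  (hF2 : forall u v : Z,
      F u (v + 1)%Z - F u v =
      det2 (h1 (u - 1)%Z v, h2 (u - 1)%Z v) (h1 u v, h2 u v))
  (u v : Z) :
  let P := fun a b : Z => (X a b, Y a b) in
  let sub := fun p q : R * R => (fst p - fst q, snd p - snd q) in
  let v1 := sub (P (u + 1)%Z v) (P u v) in
  let v2 := sub (P u (v + 1)%Z) (P u v) in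
  let v3 := sub (P (u - 1)%Z v) (P u v) in
  let v4 := sub (P u (v - 1)%Z) (P u v) in
  F (u + 1)%Z v + F u (v + 1)%Z + F (u - 1)%Z v + F u (v - 1)%Z - 4 * F u v
  = det2 v3 v2 + det2 v1 v4.
Proof.
  intros P sub v1 v2 v3 v4.
  subst P sub v1 v2 v3 v4; unfold det2; simpl.
  destruct hX as [[hX1 hX2] _]. destruct hY as [[hY1 hY2] _].
  unfold det2 in hF1, hF2; simpl in hF1, hF2.
  assert (E1 : (u - 1 + 1)%Z = u) by ring.
  assert (E2 : (v - 1 + 1)%Z = v) by ring.
  pose proof (hX1 u v) as a1. pose proof (hX2 u v) as a2.
  pose proof (hX1 (u-1)%Z v) as a3. pose proof (hX2 u (v-1)%Z) as a4.
  pose proof (hY1 u v) as b1. pose proof (hY2 u v) as b2.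
  pose proof (hY1 (u-1)%Z v) as b3. pose proof (hY2 u (v-1)%Z) as b4.
  pose proof (hF1 u v) as c1. pose proof (hF2 u v) as c2.
  pose proof (hF1 (u-1)%Z v) as c3. pose proof (hF2 u (v-1)%Z) as c4.
  rewrite E1 in a3, b3, c3. rewrite E2 in a4, b4, c4.
  assert (F (u+1)%Z v = F u v + (F (u+1)%Z v - F u v)) as -> by ring.
  assert (F u (v+1)%Z = F u v + (F u (v+1)%Z - F u v)) as -> by ring.
  assert (F (u-1)%Z v = F u v - (F u v - F (u-1)%Z v)) as -> by ring.
  assert (F u (v-1)%Z = F u v - (F u v - F u (v-1)%Z)) as -> by ring.
  assert (X (u+1)%Z v = X u v + (X (u+1)%Z v - X u v)) as -> by ring.
  assert (X u (v+1)%Z = X u v + (X u (v+1)%Z - X u v)) as -> by ring.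
  assert (X (u-1)%Z v = X u v - (X u v - X (u-1)%Z v)) as -> by ring.
  assert (X u (v-1)%Z = X u v - (X u v - X u (v-1)%Z)) as -> by ring.
  assert (Y (u+1)%Z v = Y u v + (Y (u+1)%Z v - Y u v)) as -> by ring.
  assert (Y u (v+1)%Z = Y u v + (Y u (v+1)%Z - Y u v)) as -> by ring.
  assert (Y (u-1)%Z v = Y u v - (Y u v - Y (u-1)%Z v)) as -> by ring.
  assert (Y u (v-1)%Z = Y u v - (Y u v - Y u (v-1)%Z)) as -> by ring.
  rewrite a1, a2, a3, a4, b1, b2, b3, b4, c1, c2, c3, c4.
  ring.
Qed.
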